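(* For proposition letters $p,o,q$, the formula $\mathcal{K}hm(p,o,q)\wedge\neg\mathcal{K}hm(p,\bot,q)\to\mathcal{K}hm(p,\bot,o)$ is valid, i.e., true at every state of every model.
   Context: Fix a countable set of proposition letters $\mathbf{P}$ and a countable non-empty set of action symbols $\Sigma$. Formulas: $\phi ::= p \mid \neg\phi \mid (\phi\wedge\phi) \mid \mathcal{K}hm(\phi,\phi,\phi)$; $\top,\bot,\to$ as usual. A model is $(S,\mathcal{R},\mathcal{V})$ with $S\neq\emptyset$, $\mathcal{R}:\Sigma\to 2^{S\times S}$, $\mathcal{V}:S\to 2^{\mathbf{P}}$. For $\sigma=a_1\cdots a_n\in\Sigma^*$, $s\xrightarrow{\sigma}t$ means there is a path $s\xrightarrow{a_1}\cdots\xrightarrow{a_n}t$ ($s\xrightarrow{\epsilon}s$ for the empty sequence); $\sigma_k=a_1\cdots a_k$, $\sigma_0=\epsilon$. $\sigma$ is strongly $\chi$-executable at $s'$ if for each $0\le k<n$, every $t$ with $s'\xrightarrow{\sigma_k}t$ has an $a_{k+1}$-successor, and every $t$ with $s'\xrightarrow{\sigma_k}t$ for $0<k<n$ satisfies $\chi$. $\mathcal{M},s\vDash\mathcal{K}hm(\psi,\chi,\phi)$ iff there is $\sigma\in\Sigma^*$ such that for every $s'$ with $\mathcal{M},s'\vDash\psi$, $\sigma$ is strongly $\chi$-executable at $s'$ and $\mathcal{M},t\vDash\phi$ for all $t$ with $s'\xrightarrow{\sigma}t$; atoms and Booleans are interpreted as usual ($\mathcal{M},s\vDash p$ iff $p\in\mathcal{V}(s)$).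 *)

(* Defs.v *)
From Stdlib Require Import List Arith.
Import ListNotations.
Set Implicit Arguments.

Inductive form (P : Type) : Type :=
| Var : P -> form P
| Neg : form P -> form P
| And : form P -> form P -> form P
| Khm : form P -> form P -> form P -> form P.

Arguments Var {P} _.
Arguments Neg {P} _.
Arguments And {P} _ _.
Arguments Khm {P} _ _ _.

Definition Bot {P : Type} (r : P) : form P := And (Var r) (Neg (Var r)).
Definition Top {P : Type} (r : P) : form P := Neg (Bot r).
Definition Imp {P : Type} (a b : form P) : form P := Neg (And a (Neg b)).

Section Semantics.
Variables (P Sig S : Type).
Variable R : Sig -> S -> S -> Prop.
Variable V : S -> P -> Prop.

Fixpoint reach (sigma : list Sig) (s t : S) : Prop :=
  match sigma with
  | [] => s = t
  | a :: l => exists u, R a s u /\ reach l u t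
  end.

Definition strongly_exec (chi : S -> Prop) (sigma : list Sig) (s' : S) : Prop :=
  (forall k a, nth_error sigma k = Some a ->
     forall t, reach (firstn k sigma) s' t -> exists u, R a t u) /\
  (forall k, 0 < k -> k < length sigma ->
     forall t, reach (firstn k sigma) s' t -> chi t).

Fixpoint sat (f : form P) (s : S) : Prop :=
  match f with
  | Var p => V s p
  | Neg g => ~ sat g s
  | And g h => sat g s /\ sat h s
  | Khm psi chi phi =>
      exists sigma : list Sig,
        forall s', sat psi s' ->
          strongly_exec (sat chi) sigma s' /\
          (forall t, reach sigma s' t -> sat phi t)
  end.
End Semantics.

Definition countable (T : Type) : Prop :=
  exists f : T -> nat, forall x y, f x = f y -> x = y.

(* Main.v *)
Require Import Defs.
From Stdlib Require Import List Arith Lia.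
Import ListNotations.

Theorem mainTheorem5
  (P Sig : Type) (HPc : countable P) (HSc : countable Sig) (HSne : inhabited Sig)
  (p o q : P)
  (S : Type) (HS : inhabited S) (R : Sig -> S -> S -> Prop) (V : S -> P -> Prop)
  (s : S) :
  sat R V
    (Imp (And (Khm (Var p) (Var o) (Var q))
              (Neg (Khm (Var p) (Bot p) (Var q))))
         (Khm (Var p) (Bot p) (Var o))) s.
Proof.
  simpl. intros [[[sigma H] Hn] Hno].
  destruct sigma as [|a [|b l]].
  - apply Hn. exists []. intros s' Hs'. destruct (H s' Hs') as [[E1 E2] Hq].
    split; [split|]; auto. intros k Hk Hk'. simpl in Hk'. lia.
  - apply Hn. exists [a]. intros s' Hs'. destruct (H s' Hs') as [[E1 E2] Hq].
    split; [split|]; auto. intros k Hk Hk'. simpl in Hk'. lia.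
  - apply Hno. exists [a]. intros s' Hs'. destruct (H s' Hs') as [[E1 E2] Hq].
    split; [split|].
    + intros k a' Hk t Ht. destruct k as [|k].
      * simpl in Hk. injection Hk as <-. apply (E1 0 a); auto.
      * simpl in Hk. destruct k; discriminate.
    + intros k Hk Hk'. simpl in Hk'. lia.
    + intros t Ht. apply (E2 1); simpl; auto; lia.
Qed.
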